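(* Let $d\ge 3$ be odd. The group $G_d$ is not just infinite, i.e., it is infinite and has a nontrivial normal subgroup of infinite index.
   Context: Let $d\ge 3$, $X=\{1,\dots,d\}$, $T$ the $d$-regular rooted tree with vertex set $X^*$. $\mathrm{Aut}(T)$ is the group of root-preserving automorphisms with product left-to-right: $(gh)(u)=h(g(u))$. Sections $g|_u$ are defined by $g(uv)=g(u)\,g|_u(v)$; we write $g=(g|_1,\dots,g|_d)\lambda_g$ with $\lambda_g\in S_d$ the action on the first level; $e$ is the identity; $\overline{j}\in\{1,\dots,d\}$ denotes $j$ mod $d$. $G_d=\langle a_1,\dots,a_d\rangle\le\mathrm{Aut}(T)$ where $a_i$ acts on the first level as $(i\ \overline{i+1})$, with $a_i|_i=a_i$, $a_i|_{\overline{i+1}}=a_{\overline{i+1}}$, and $a_i|_x=e$ otherwise. A group is just infinite if it is infinite and every nontrivial normal subgroup has finite index. *)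

(* Defs.v *)
From mathcomp Require Import all_boot.
Set Implicit Arguments.
Unset Strict Implicit.
Unset Printing Implicit Defensive.

(* Letters X = {1,...,d} are encoded as 'I_d = {0,...,d-1} (letter k+1 <-> k).
   Vertices of the d-regular rooted tree T are words  seq 'I_d.
   The cyclic successor j |-> j+1 mod d is  ordS j. *)

Definition tfun (d : nat) := seq 'I_d -> seq 'I_d.

(* Product is left-to-right: (g h)(u) = h (g u). *)
Definition tmul (d : nat) (g h : tfun d) : tfun d := fun u => h (g u).
Definition tid (d : nat) : tfun d := fun u => u.

Fixpoint gen_a (d : nat) (i : 'I_d) (w : seq 'I_d) {struct w} : seq 'I_d :=
  match w with
  | [::] => [::]
  | x :: v =>
      if x == i then ordS i :: gen_a i v
      else if x == ordS i then i :: gen_a (ordS i) v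
      else x :: v
  end.

(* G_d = < a_1, ..., a_d >: closure of the identity under right multiplication
   by generators and by their inverses (g = f a_i^{-1}  iff  g a_i = f). *)
Inductive in_Gd (d : nat) : tfun d -> Prop :=
| Gd_id : in_Gd (@tid d)
| Gd_mul (f : tfun d) (i : 'I_d) : in_Gd f -> in_Gd (tmul f (gen_a i))
| Gd_div (f g : tfun d) (i : 'I_d) : in_Gd f -> tmul g (gen_a i) = f -> in_Gd g.

Definition infinite_set (d : nat) (G : tfun d -> Prop) : Prop :=
  ~ exists gs : seq (tfun d),
      forall g, G g -> exists2 k, k < size gs & g = nth (@tid d) gs k.

(* N is a subgroup of G (the inverse m of n is characterized by n m = 1,
   all maps involved being bijections of the tree). *)
Definition subgroup (d : nat) (G N : tfun d -> Prop) : Prop :=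
  [/\ forall n, N n -> G n,
      N (@tid d),
      forall n m, N n -> N m -> N (tmul n m)
    & forall n m, N n -> G m -> tmul n m = @tid d -> N m].

(* N is normal in G: g^{-1} n g lies in N for every g in G, n in N. *)
Definition normal_subgroup (d : nat) (G N : tfun d -> Prop) : Prop :=
  subgroup G N /\
  forall g n, G g -> N n -> exists2 m, N m & tmul g m = tmul n g.

Definition finite_index (d : nat) (G N : tfun d -> Prop) : Prop :=
  exists hs : seq (tfun d),
    (forall k, k < size hs -> G (nth (@tid d) hs k)) /\
    forall g, G g -> exists2 k, k < size hs &
       exists2 n, N n & g = tmul n (nth (@tid d) hs k).

(* Main.v *)
From Stdlib Require Import ZArith Lia FunctionalExtensionality Classical.
Require Import Defs.
From mathcomp Require Import all_boot zify.



Fixpoint gen_ai {d : nat} (i : 'I_d) (w : seq 'I_d) {struct w} : seq 'I_d :=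
  match w with
  | [::] => [::]
  | x :: v =>
      if x == ordS i then i :: gen_ai i v
      else if x == i then ordS i :: gen_ai (ordS i) v
      else x :: v
  end.

Definition letter (d : nat) := ('I_d * bool)%type.
Definition gen {d} (l : letter d) : tfun d := if l.2 then gen_a l.1 else gen_ai l.1.
Fixpoint eval {d} (w : seq (letter d)) (u : seq 'I_d) : seq 'I_d :=
  match w with [::] => u | l :: w' => eval w' (gen l u) end.

Definition step {d} (l : letter d) (x : 'I_d) : 'I_d * seq (letter d) :=
  if l.2 then
    (if x == l.1 then (ordS l.1, [:: (l.1, true)])
     else if x == ordS l.1 then (l.1, [:: (ordS l.1, true)]) else (x, [::]))
  else
    (if x == ordS l.1 then (l.1, [:: (l.1, false)])
     else if x == l.1 then (ordS l.1, [:: (ordS l.1, false)]) else (x, [::])).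

Fixpoint perm {d} (w : seq (letter d)) (x : 'I_d) : 'I_d :=
  match w with [::] => x | l :: w' => perm w' (step l x).1 end.
Fixpoint sec {d} (w : seq (letter d)) (x : 'I_d) : seq (letter d) :=
  match w with [::] => [::] | l :: w' => (step l x).2 ++ sec w' (step l x).1 end.

Lemma eval_cat {d} (w1 w2 : seq (letter d)) u : eval (w1 ++ w2) u = eval w2 (eval w1 u).
Proof. by elim: w1 u => //= l w IH u. Qed.

Lemma gen_step {d} (l : letter d) x v : gen l (x :: v) = (step l x).1 :: eval (step l x).2 v.
Proof.
case: l => i [] /=; rewrite /gen /step /=.
- by case: ifP => _ //; case: ifP.
- by case: ifP => _ //; case: ifP.
Qed.

Lemma eval_step {d} (w : seq (letter d)) x v : eval w (x :: v) = perm w x :: eval (sec w x) v.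
Proof.
elim: w x v => //= l w IH x v.
by rewrite gen_step IH eval_cat.
Qed.

Lemma ordS_neq {d} (i : 'I_d) : 1 < d -> ordS i != i.
Proof.
move=> hd; apply/eqP => /(congr1 val) /=.
have := ltn_ord i; case: (ltngtP i.+1 d) => h1 h2.
- by rewrite modn_small //; lia.
- lia.
- rewrite h1 modnn => hi; lia.
Qed.

Lemma ordSS_neq {d} (i : 'I_d) : 2 < d -> ordS (ordS i) != i.
Proof.
move=> hd; apply/eqP => /(congr1 val) /=.
have := ltn_ord i; case: (ltngtP i.+1 d) => h1 h2.
- rewrite (modn_small h1). case: (ltngtP i.+2 d) => h3.
  + by rewrite modn_small //; lia.
  + lia.
  + rewrite h3 modnn; lia.
- lia.
- rewrite h1 modnn modn_small; lia.
Qed.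

Lemma gen_ai_a {d} (i : 'I_d) w : 1 < d -> gen_ai i (gen_a i w) = w.
Proof.
move=> hd; elim: w i => //= x v IH i.
case: (x =P i) => [->|hxi]; first by rewrite /= eqxx IH.
case: (x =P ordS i) => [->|hxs] /=.
  by rewrite eq_sym (negbTE (ordS_neq i hd)) eqxx IH.
by rewrite (introF eqP hxs) (introF eqP hxi).
Qed.

Lemma gen_a_ai {d} (i : 'I_d) w : 1 < d -> gen_a i (gen_ai i w) = w.
Proof.
move=> hd; elim: w i => //= x v IH i.
case: (x =P ordS i) => [->|hxs]; first by rewrite /= eqxx IH.
case: (x =P i) => [->|hxi] /=.
  by rewrite (negbTE (ordS_neq i hd)) eqxx IH.
by rewrite (introF eqP hxs) (introF eqP hxi).
Qed.


Definition pos {d} (w : seq (letter d)) := count (fun l => l.2) w.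
Definition neg {d} (w : seq (letter d)) := count (fun l => ~~ l.2) w.

Lemma step_inv {d} (l : letter d) x : 1 < d -> (step l (step l x).1).1 = x.
Proof.
move=> hd; case: l => i [] /=; rewrite /step /=.
- case: (x =P i) => [->|h1] /=; first by rewrite (negbTE (ordS_neq i hd)) eqxx.
  case: (x =P ordS i) => [->|h2] /=; first by rewrite eqxx.
  by rewrite (introF eqP h1) (introF eqP h2).
- case: (x =P ordS i) => [->|h1] /=.
    by rewrite eq_sym (negbTE (ordS_neq i hd)) eqxx.
  case: (x =P i) => [->|h2] /=; first by rewrite eqxx.
  by rewrite (introF eqP h1) (introF eqP h2).
Qed.

Lemma step_inj {d} (l : letter d) : 1 < d -> injective (fun x => (step l x).1).
Proof. by move=> hd; apply: (can_inj (g := fun x => (step l x).1)) => x; apply: step_inv. Qed.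

Lemma step_size {d} (l : letter d) x :
  size (step l x).2 = ((x == l.1) || (x == ordS l.1)).
Proof.
case: l => i [] /=; rewrite /step /=.
- by case: (x == i); case: (x == ordS i).
- by case: (x == ordS i); case: (x == i); rewrite ?orbT.
Qed.

Lemma step_pos {d} (l : letter d) x : pos (step l x).2 = l.2 * size (step l x).2.
Proof.
case: l => i [] /=; rewrite /step /=.
- by case: (x == i); case: (x == ordS i).
- by case: (x == ordS i); case: (x == i).
Qed.

Lemma step_neg {d} (l : letter d) x : neg (step l x).2 = (~~ l.2) * size (step l x).2.
Proof.
case: l => i [] /=; rewrite /step /=.
- by case: (x == i); case: (x == ordS i).
- by case: (x == ordS i); case: (x == i).
Qed.

Lemma sum2 {d} (i j : 'I_d) : i != j -> \sum_(x < d) ((x == i) || (x == j) : nat) = 2.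
Proof.
move=> hij; rewrite (bigD1 i) //= eqxx /= (bigD1 j) /=; last by rewrite eq_sym.
rewrite eqxx orbT big1 // => x /andP [hx1 hx2].
by rewrite (negbTE hx1) (negbTE hx2).
Qed.

Lemma sum_step {d} (l : letter d) : 1 < d -> \sum_(x < d) size (step l x).2 = 2.
Proof.
move=> hd; rewrite (eq_bigr _ (fun x _ => step_size l x)) sum2 //.
by rewrite eq_sym ordS_neq.
Qed.

Lemma sum_pos {d} (w : seq (letter d)) : 1 < d -> \sum_(x < d) pos (sec w x) = 2 * pos w.
Proof.
move=> hd; elim: w => [|l w IH] /=; first by rewrite big1.
rewrite (eq_bigr (fun x => pos (step l x).2 + pos (sec w (step l x).1))); last first.
  by move=> x _; rewrite /pos count_cat.
have E : \sum_(x < d) pos (sec w (step l x).1) = \sum_(x < d) pos (sec w x).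
  by rewrite [RHS](reindex_inj (step_inj l hd)).
rewrite big_split /= E IH.
rewrite (eq_bigr _ (fun x _ => step_pos l x)) -big_distrr /= sum_step //.
rewrite /pos /=; lia.
Qed.

Lemma sum_neg {d} (w : seq (letter d)) : 1 < d -> \sum_(x < d) neg (sec w x) = 2 * neg w.
Proof.
move=> hd; elim: w => [|l w IH] /=; first by rewrite big1.
rewrite (eq_bigr (fun x => neg (step l x).2 + neg (sec w (step l x).1))); last first.
  by move=> x _; rewrite /neg count_cat.
have E : \sum_(x < d) neg (sec w (step l x).1) = \sum_(x < d) neg (sec w x).
  by rewrite [RHS](reindex_inj (step_inj l hd)).
rewrite big_split /= E IH.
rewrite (eq_bigr _ (fun x _ => step_neg l x)) -big_distrr /= sum_step //.
rewrite /neg /=; lia.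
Qed.

Lemma pos_sec_le {d} (w : seq (letter d)) x : pos (sec w x) <= pos w.
Proof.
elim: w x => //= l w IH x; rewrite /pos count_cat -/(pos _) -/(pos (sec _ _)).
have := IH (step l x).1; rewrite step_pos step_size.
by case: l => i [] /=; case: (_ || _) => /=; rewrite /pos /=; lia.
Qed.

Lemma neg_sec_le {d} (w : seq (letter d)) x : neg (sec w x) <= neg w.
Proof.
elim: w x => //= l w IH x; rewrite /neg count_cat -/(neg _) -/(neg (sec _ _)).
have := IH (step l x).1; rewrite step_neg step_size.
by case: l => i [] /=; case: (_ || _) => /=; rewrite /neg /=; lia.
Qed.

Lemma size_pos_neg {d} (w : seq (letter d)) : size w = pos w + neg w.
Proof. by elim: w => //= l w ->; rewrite /pos /neg /=; case: l.2 => /=; lia. Qed.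

Definition pairOK {d} (x y i : 'I_d) :=
  ((x == i) && (y == ordS i)) || ((y == i) && (x == ordS i)).

Lemma step_size_le {d} (l : letter d) x : size (step l x).2 <= 1.
Proof. by rewrite step_size; case: (_ || _). Qed.

Lemma size_sec_le {d} (w : seq (letter d)) x : size (sec w x) <= size w.
Proof.
elim: w x => //= l w IH x; rewrite size_cat.
have := IH (step l x).1; have := step_size_le l x; lia.
Qed.

Lemma step_swap {d} (l : letter d) x y : 1 < d -> pairOK x y l.1 ->
  (step l x).1 = y /\ (step l y).1 = x.
Proof.
move=> hd; case: l => i b /=; rewrite /pairOK /step /=.
have hS := ordS_neq i hd.
case/orP => /andP [/eqP -> /eqP ->]; case: b => /=;
  rewrite ?eqxx ?(negbTE hS) // eq_sym (negbTE hS) //.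
Qed.

Lemma hit2 {d} (w : seq (letter d)) x y : 1 < d -> x != y ->
  size (sec w x) = size w -> size (sec w y) = size w ->
  forall l, l \in w -> pairOK x y l.1.
Proof.
move=> hd; elim: w x y => //= l w IH x y hxy.
rewrite !size_cat => hx hy.
have hx1 := size_sec_le w (step l x).1; have hy1 := size_sec_le w (step l y).1.
have hsx := step_size_le l x; have hsy := step_size_le l y.
have ex : size (step l x).2 = 1 by lia.
have ey : size (step l y).2 = 1 by lia.
have hp : pairOK x y l.1.
  have H1 : (x == l.1) || (x == ordS l.1) by move: ex; rewrite step_size; case: (_ || _).
  have H2 : (y == l.1) || (y == ordS l.1) by move: ey; rewrite step_size; case: (_ || _).
  rewrite /pairOK; case/orP: H1 => /eqP hx0; case/orP: H2 => /eqP hy0; subst x y.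
  - by rewrite eqxx in hxy.
  - by rewrite !eqxx.
  - by rewrite !eqxx orbT.
  - by rewrite eqxx in hxy.
move=> l'; rewrite inE => /orP [/eqP -> //|hl'].
have [h1 h2] := step_swap l x y hd hp.
have : pairOK y x l'.1.
  apply: (IH y x); first by rewrite eq_sym.
  - rewrite -h1; lia.
  - rewrite -h2; lia.
  - exact hl'.
by rewrite /pairOK orbC.
Qed.

Lemma pair_uniq {d} (x y i j : 'I_d) : 2 < d -> pairOK x y i -> pairOK x y j -> i = j.
Proof.
move=> hd; have hd1 : 1 < d by lia.
rewrite /pairOK.
case/orP => /andP [/eqP hx /eqP hy]; case/orP => /andP [/eqP hx' /eqP hy'];
  first [congruence | move/eqP: (ordSS_neq i hd); congruence | move/eqP: (ordSS_neq j hd); congruence].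
Qed.

Definition R {d} (w : seq (letter d)) := forall u, eval w u = u.
Definition T {d} (w : seq (letter d)) : Z := (Z.of_nat (pos w) - Z.of_nat (neg w))%Z.
Definition IHl d (n : nat) := forall w : seq (letter d), size w < n -> R w -> pos w = neg w.
Definition Bad {d} (n : nat) (w : seq (letter d)) := [/\ size w = n, R w & pos w <> neg w].

Lemma R_sec {d} (w : seq (letter d)) x : R w -> R (sec w x).
Proof. by move=> h v; have := h (x :: v); rewrite eval_step => -[]. Qed.

Lemma R_single {d} (l : letter d) : 1 < d -> ~ R [:: l].
Proof.
case: l => i b hd h; have := h [:: i]; case: b {h} => /=; rewrite /gen /=.
- by rewrite eqxx => -[] /eqP; rewrite (negbTE (ordS_neq i hd)).
- by rewrite eq_sym (negbTE (ordS_neq i hd)) eqxx => -[] /eqP; rewrite (negbTE (ordS_neq i hd)).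
Qed.

Lemma R_cancel {d} (l1 l2 : letter d) w : 1 < d -> l1.1 = l2.1 -> l1.2 != l2.2 ->
  R (l1 :: l2 :: w) -> R w.
Proof.
move=> hd; case: l1 l2 => i1 b1 [i2 b2] /= <- hb h u.
have := h u => /=; rewrite /gen /=.
by case: b1 b2 {h} hb => [] [] //= _; rewrite ?gen_ai_a ?gen_a_ai.
Qed.

Lemma bad_sec {d} n (w : seq (letter d)) x : IHl d n -> R w -> size w = n ->
  pos (sec w x) <> neg (sec w x) -> Bad n (sec w x).
Proof.
move=> IH hR hs hpn; split => //; last exact: R_sec.
have := size_sec_le w x; rewrite leq_eqVlt => /orP [/eqP -> //|hlt].
by exfalso; apply: hpn; apply: IH; [rewrite -hs | exact: R_sec].
Qed.

Lemma lemA {d} n (w : seq (letter d)) : 2 < d -> IHl d n -> Bad n w ->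
  exists x, Bad n (sec w x) /\
    ((T (sec w x) = 2 * T w)%Z \/ exists y, x != y /\ forall l, l \in w -> pairOK x y l.1).
Proof.
move=> hd IH [hs hR hpn]; have hd1 : 1 < d by lia.
case: (pickP (fun x => pos (sec w x) != neg (sec w x))) => [x /eqP hx|hnone]; last first.
  exfalso; apply: hpn.
  have : \sum_(x < d) pos (sec w x) = \sum_(x < d) neg (sec w x).
    by apply: eq_bigr => x _; move/negbFE/eqP: (hnone x).
  rewrite sum_pos // sum_neg //; lia.
exists x; have bx := bad_sec n w x IH hR hs hx; split => //.
case: (pickP (fun y => (x != y) && (pos (sec w y) != neg (sec w y)))) => [y /andP [hxy /eqP hy]|hnone].
  right; exists y; split => //.
  have [bx1 _ _] := bx; have [by1 _ _] := bad_sec n w y IH hR hs hy.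
  by apply: hit2 => //; rewrite ?bx1 ?by1.
left.
have E : \sum_(y < d | y != x) pos (sec w y) = \sum_(y < d | y != x) neg (sec w y).
  apply: eq_bigr => y hyx; have := hnone y; rewrite eq_sym hyx /= => /negbFE /eqP //.
have hp' : pos (sec w x) + \sum_(y < d | y != x) neg (sec w y) = 2 * pos w.
  by rewrite -E -(sum_pos w hd1) [in RHS](bigD1 x).
have hn' : neg (sec w x) + \sum_(y < d | y != x) neg (sec w y) = 2 * neg w.
  by rewrite -(sum_neg w hd1) [in RHS](bigD1 x).
move: hp' hn'; set S := \sum_(y < d | y != x) _.
rewrite /T; lia.
Qed.

Lemma two_letters {d} (i : 'I_d) b x : 1 < d -> (x == i) || (x == ordS i) ->
  exists j1 j2, (step (i, b) x).2 = [:: (j1, b)] /\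
     (step (i, b) (step (i, b) x).1).2 = [:: (j2, b)] /\ j1 != j2.
Proof.
move=> hd hx; have hS := ordS_neq i hd; have hS' : i != ordS i by rewrite eq_sym.
rewrite /step /=.
case/orP: hx => /eqP ->; case: b => /=; rewrite ?eqxx ?(negbTE hS) ?(negbTE hS') /= ?eqxx.
- by exists i, (ordS i).
- by exists (ordS i), i.
- by exists (ordS i), i.
- by exists i, (ordS i).
Qed.

Lemma lemB {d} n (w : seq (letter d)) : 2 < d -> IHl d n -> Bad n w ->
  exists w' : seq (letter d), Bad n w' /\ T w' = (2 * T w)%Z.
Proof.
move=> hd IH bw; have hd1 : 1 < d by lia.
have [x [bx [hdbl | [y [hxy hall]]]]] := lemA n _ hd IH bw; first by exists (sec w x).
have [hs hR hpn] := bw; have [hsx hRx hpnx] := bx.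
have hpx := pos_sec_le w x; have hnx := neg_sec_le w x.
have hz1 := size_pos_neg w; have hz2 := size_pos_neg (sec w x).
have eT : T (sec w x) = T w by rewrite /T; lia.
move: w bw hs hR hpn bx hsx hRx hpnx hpx hnx hz1 hz2 eT hall => [|l1 [|l2 w]] bw hs hR hpn bx hsx hRx hpnx hpx hnx hz1 hz2 eT hall.
- by exfalso; apply: hpn.
- by exfalso; apply: (R_single l1 hd1).
have h1 := hall l1 (mem_head _ _).
have h2 : pairOK x y l2.1 by apply: hall; rewrite inE mem_head orbT.
have ei := pair_uniq x y _ _ hd h1 h2.
case: (boolP (l1.2 == l2.2)) => hb; last first.
  exfalso; have hRw := R_cancel l1 l2 w hd1 ei hb hR.
  have hsz : size w < n by rewrite -hs /=; lia.
  have := IH w hsz hRw.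
  move=> e; apply: hpn; move: hb e; rewrite /pos /neg /= => hb e; rewrite e.
  by move: hb; case: l1.2; case: l2.2.
case: l1 l2 ei hb h1 h2 bw hs hR hpn bx hsx hRx hpnx hpx hnx hz1 hz2 eT hall => i b [i2 b2] /= <- /eqP <- h1 h2 bw hs hR hpn bx hsx hRx hpnx hpx hnx hz1 hz2 eT hall.
have hxi : (x == i) || (x == ordS i) by move: h1; rewrite /pairOK; case/orP => /andP [h h']; [by rewrite h | by rewrite h' orbT].
have [j1 [j2 [e1 [e2 hj]]]] := two_letters i b x hd1 hxi.
have [x2 [bx2 [hdbl2 | [y2 [hxy2 hall2]]]]] := lemA n _ hd IH bx.
  by exists (sec (sec [:: (i, b), (i, b) & w] x) x2); split => //; rewrite hdbl2 eT.
exfalso; move: hj; apply/negP; rewrite negbK; apply/eqP.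
apply: (pair_uniq x2 y2 _ _ hd (hall2 (j1, b) _) (hall2 (j2, b) _)).
- by rewrite /= e1 /= mem_head.
- by rewrite /= e1 e2 /= inE mem_head orbT.
Qed.

Lemma key_ind {d} n : 2 < d -> IHl d n.
Proof.
move=> hd; elim: n => [|n IH] w; first by [].
rewrite ltnS leq_eqVlt => /orP [/eqP hs hR|hlt hR]; last exact: IH.
apply/eqP; apply/negP => /negP/eqP hpn.
have bw : Bad n w by [].
have grow : forall k, exists w' : seq (letter d), Bad n w' /\ (Z.of_nat k <= Z.abs (T w'))%Z.
  elim=> [|k [w' [bw' hk]]]; first by exists w; split => //; lia.
  have [w'' [bw'' e]] := lemB n _ hd IH bw'.
  exists w''; split => //.
  have [_ _ hp'] := bw'.
  have : T w' <> 0%Z by rewrite /T; lia.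
  rewrite e; lia.
have [w' [[hs' _ _] hk]] := grow n.+1.
have := size_pos_neg w'; rewrite /T in hk; lia.
Qed.

Lemma key {d} (w : seq (letter d)) : 2 < d -> R w -> pos w = neg w.
Proof. by move=> hd; apply: (key_ind (size w).+1 hd). Qed.

Definition winv {d} (w : seq (letter d)) : seq (letter d) :=
  rev (map (fun l => (l.1, ~~ l.2)) w).

Lemma eval_winv_r {d} (w : seq (letter d)) u : 1 < d -> eval (w ++ winv w) u = u.
Proof.
move=> hd; elim: w u => //= l w IH u.
rewrite /winv /= rev_cons -cats1 -/(winv w) catA eval_cat IH /=.
by case: l => i [] /=; rewrite /gen /= ?gen_ai_a ?gen_a_ai.
Qed.

Lemma winvK {d} (w : seq (letter d)) : winv (winv w) = w.
Proof.
rewrite /winv map_rev revK -map_comp.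
by rewrite (eq_map (g := id)) ?map_id // => -[i b] /=; rewrite negbK.
Qed.

Lemma eval_winv_l {d} (w : seq (letter d)) u : 1 < d -> eval (winv w ++ w) u = u.
Proof. by move=> hd; rewrite -{2}(winvK w) eval_winv_r. Qed.

Lemma pos_winv {d} (w : seq (letter d)) : pos (winv w) = neg w.
Proof. by rewrite /winv /pos /neg count_rev count_map. Qed.
Lemma neg_winv {d} (w : seq (letter d)) : neg (winv w) = pos w.
Proof.
rewrite /winv /pos /neg count_rev count_map; apply: eq_count => -[i b] /=.
by rewrite negbK.
Qed.
Lemma pos_cat {d} (w1 w2 : seq (letter d)) : pos (w1 ++ w2) = pos w1 + pos w2.
Proof. by rewrite /pos count_cat. Qed.
Lemma neg_cat {d} (w1 w2 : seq (letter d)) : neg (w1 ++ w2) = neg w1 + neg w2.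
Proof. by rewrite /neg count_cat. Qed.

Lemma wd {d} (w1 w2 : seq (letter d)) : 2 < d -> (forall u, eval w1 u = eval w2 u) ->
  pos w1 + neg w2 = neg w1 + pos w2.
Proof.
move=> hd h; have hd1 : 1 < d by lia.
have : R (w1 ++ winv w2).
  by move=> u; rewrite eval_cat h -eval_cat eval_winv_r.
move/(key _ hd); rewrite pos_cat neg_cat pos_winv neg_winv; lia.
Qed.

Lemma G_eval {d} (g : tfun d) : 1 < d -> in_Gd g -> exists w, eval w = g.
Proof.
move=> hd; elim => [|f i _ [w <-]|f g' i _ [w ew] e].
- by exists [::].
- by exists (w ++ [:: (i, true)]); apply: functional_extensionality => u; rewrite eval_cat.
- exists (w ++ [:: (i, false)]); apply: functional_extensionality => u.
  by rewrite eval_cat ew -e /= /gen /= /tmul gen_ai_a.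
Qed.

Lemma eval_G {d} (w : seq (letter d)) : 1 < d -> in_Gd (eval w).
Proof.
move=> hd; elim/last_ind: w => [|w [i b] IH]; first exact: Gd_id.
have E : eval (rcons w (i, b)) = tmul (eval w) (gen (i, b)).
  by apply: functional_extensionality => u; rewrite -cats1 eval_cat.
rewrite E; case: b {E} => /=.
- exact: Gd_mul.
- apply: (Gd_div (f := eval w) (i := i)) => //; apply: functional_extensionality => u.
  rewrite /tmul /gen /=.

by rewrite gen_a_ai.
Qed.

Lemma bound {d} (hd : 2 < d) (hs : seq (tfun d)) : exists B, forall j w,
  j < size hs -> eval w = nth (@tid d) hs j -> pos w <= neg w + B.
Proof.
elim: hs => [|h hs [B hB]]; first by exists 0.
case: (classic (exists w0 : seq (letter d), eval w0 = h)) => [[w0 e0]|hn].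
  exists (maxn (pos w0) B) => [[|j]] w /= hj e.
    have hu : forall u, eval w u = eval w0 u by move=> u; rewrite e e0.
    have := wd w w0 hd hu; lia.
  have := hB j w hj e; lia.
exists B => -[|j] w /= hj e.
  by exfalso; apply: hn; exists w.
exact: hB j w hj e.
Qed.

Definition Nsub {d} (g : tfun d) := exists w : seq (letter d), eval w = g /\ pos w = neg w.

Lemma pw_pos {d} (i : 'I_d) k : pos (nseq k (i, true)) = k.
Proof. by rewrite /pos count_nseq /= mul1n. Qed.
Lemma pw_neg {d} (i : 'I_d) k : neg (nseq k (i, true)) = 0.
Proof. by rewrite /neg count_nseq /=. Qed.

Theorem corollary4p4 (d : nat) (hd : 3 <= d) (hodd : odd d) :
  infinite_set (@in_Gd d) /\
  exists N : tfun d -> Prop,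
    [/\ normal_subgroup (@in_Gd d) N,
        (exists2 n, N n & n <> @tid d)
      & ~ finite_index (@in_Gd d) N].
Proof.
have hd2 : 2 < d by [].
have hd1 : 1 < d by lia.
have hd0 : 0 < d by lia.
pose i0 := Ordinal hd0.
split.
  move=> [gs hgs]; have [B hB] := bound hd2 gs.
  have [k hk e] := hgs _ (eval_G (nseq B.+1 (i0, true)) hd1).
  have := hB k _ hk e; rewrite pw_pos pw_neg; lia.
exists Nsub; split.
- split; first split.
  + by move=> n [w [<- _]]; apply: eval_G.
  + by exists [::].
  + move=> n m [w1 [<- e1]] [w2 [<- e2]]; exists (w1 ++ w2); split.
      by apply: functional_extensionality => u; rewrite eval_cat.
    by rewrite pos_cat neg_cat e1 e2.
  + move=> n m [wn [<- en]] /(G_eval _ hd1) [wm <-] e; exists wm; split => //.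
    have : R (wn ++ wm) by move=> u; rewrite eval_cat; exact: (congr1 (fun f => f u) e).
    move/(key _ hd2); rewrite pos_cat neg_cat; lia.
  + move=> g n /(G_eval _ hd1) [wg <-] [wn [<- en]].
    exists (eval (winv wg ++ wn ++ wg)).
      exists (winv wg ++ wn ++ wg); split => //.
      by rewrite !pos_cat !neg_cat pos_winv neg_winv; lia.
    apply: functional_extensionality => u; rewrite /tmul.
    by rewrite eval_cat -(eval_cat wg (winv wg)) eval_winv_r // eval_cat.
- pose i1 := Ordinal hd1; pose i2 := Ordinal hd2.
  have S0 : ordS i0 = i1 by apply: val_inj; rewrite /= modn_small.
  have S1 : ordS i1 = i2 by apply: val_inj; rewrite /= modn_small.
  have n21 : (i2 == i1) = false by rewrite -val_eqE.
  have n20 : (i2 == i0) = false by rewrite -val_eqE.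
  pose c := [:: (i0, true); (i1, true); (i0, false); (i1, false)].
  exists (eval c); first by exists c.
  move=> ec; have := congr1 (fun f => f [:: i0]) ec.
  rewrite /c /tid /= /gen /= S0 eqxx S1 /= ?S0 ?n21 ?n20 /= ?S1 ?eqxx /=.


  by move=> [].
- move=> [hs [hG hcov]]; have [B hB] := bound hd2 hs.
  have [k hk [n [wn [<- en]] e]] := hcov _ (eval_G (nseq B.+1 (i0, true)) hd1).
  have [wh eh] := G_eval _ hd1 (hG k hk).
  have := wd (nseq B.+1 (i0, true)) (wn ++ wh) hd2.
  have := hB k wh hk eh.
  rewrite pos_cat neg_cat pw_pos pw_neg => h1 h2.
  have : B.+1 + (neg wn + neg wh) = 0 + (pos wn + pos wh).
    apply: h2 => u; rewrite e eval_cat /tmul eh //.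
  lia.
Qed.
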